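(* Let $G$ be a connected graph with $n\ge 13$ vertices. Suppose one of the following holds: (1) $\Delta(G)=n-1$ and $e(G)=n+k$ for some $1\le k\le 10$; (2) $\Delta(G)=n-2$ and $e(G)=n+k$ for some $5\le k\le 10$; (3) $\Delta(G)=n-3$ and $e(G)=n+k$ for some $8\le k\le 10$. Then $R(G)>\sqrt{n-1}+\frac{2(k+1)}{n\sqrt{n-1}}$.
   Context: All graphs are finite and simple; $e(G)$ is the number of edges and $\Delta(G)$ the maximum degree. For a vertex $u$, $d(u)$ is its degree. The Randić index is $R(G)=\sum_{\{u,v\}\in E(G)} \frac{1}{\sqrt{d(u)d(v)}}$. *)

(* Defs.v *)
From HB Require Import structures.
From mathcomp Require Import all_boot all_order all_algebra.
Set Implicit Arguments. Unset Strict Implicit. Unset Printing Implicit Defensive.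
Import Order.TTheory GRing.Theory Num.Theory.

Definition simple_graph (T : finType) (g : rel T) : Prop :=
  symmetric g /\ irreflexive g.

Definition connected_graph (T : finType) (g : rel T) : Prop :=
  forall x y : T, connect g x y.

Definition deg (T : finType) (g : rel T) (u : T) : nat := #|[set v | g u v]|.

Definition max_deg (T : finType) (g : rel T) : nat := (\max_(u : T) deg g u)%N.

Definition edge_set (T : finType) (g : rel T) : {set {set T}} :=
  [set [set u; v] | u in [set: T], v in [set w | g u w]].

Definition num_edges (T : finType) (g : rel T) : nat := #|edge_set g|.

(* Randic index: sum over unordered edges = half the sum over ordered adjacent pairs *)
Definition randic (R : rcfType) (T : finType) (g : rel T) : R :=
  (2%:R)^-1 * \sum_(u : T) \sum_(v : T | g u v)
      (Num.sqrt ((deg g u)%:R * (deg g v)%:R))^-1.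

(* Main.v *)
Require Import Defs.
From HB Require Import structures.
From mathcomp Require Import all_boot all_order all_algebra.
From mathcomp Require Import ring lra zify.
Import Order.TTheory GRing.Theory Num.Theory.

Set Implicit Arguments. Unset Strict Implicit. Unset Printing Implicit Defensive.

Lemma set2_injr (T : finType) (a x y : T) : x != a -> y != a ->
  [set a; x] = [set a; y] -> x = y.
Proof.
move=> xa ya E. have : y \in [set a; x] by rewrite E set22.
by rewrite in_set2 (negbTE ya) => /eqP.
Qed.

Lemma edge_in (T : finType) (g : rel T) u v : g u v -> [set u; v] \in edge_set g.
Proof. move=> h; apply/imset2P; exists u v => //; by rewrite ?inE. Qed.

Lemma sum_deg (T : finType) (g : rel T) :
  (\sum_u deg g u = #|[set p : T * T | g p.1 p.2]|)%N.
Proof.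
rewrite /deg -sum1_card.
rewrite (eq_bigr (fun u => \sum_(v | g u v) 1)%N); last first.
  by move=> u _; rewrite -sum1_card; apply: eq_bigl => v; rewrite inE.
rewrite pair_big_dep /=. apply: eq_bigl => p; by rewrite inE.
Qed.

Lemma handshake (T : finType) (g : rel T) : simple_graph g ->
  (2 * num_edges g <= \sum_u deg g u)%N.
Proof.
case=> sym irr. rewrite sum_deg.
set r := fun x : T => nat_of_ord (enum_rank x).
set O1 := [set p : T * T | g p.1 p.2 && (r p.1 < r p.2)%N].
set O2 := [set p : T * T | g p.1 p.2 && (r p.2 < r p.1)%N].
have E1 : (num_edges g <= #|O1|)%N.
  apply: leq_trans (leq_imset_card (fun p : T * T => [set p.1; p.2]) O1).
  apply: subset_leq_card; apply/subsetP => e /imset2P [u v _].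
  rewrite inE => huv ->.
  have : r u != r v.
    apply/negP => /eqP /ord_inj /enum_rank_inj huv'.
    by rewrite huv' irr in huv.
  rewrite neq_ltn => /orP [h|h].
    by apply/imsetP; exists (u, v) => //; rewrite inE /= huv h.
  apply/imsetP; exists (v, u); first by rewrite inE /= sym huv h.
  by rewrite /= setUC.
have E2 : #|O2| = #|O1|.
  have inj : injective (fun p : T * T => (p.2, p.1)) by move=> [a b] [c d] /= [-> ->].
  rewrite -(card_imset O1 inj).
  apply: eq_card => p; apply/idP/idP.
    rewrite inE => /andP [h1 h2]; apply/imsetP; exists (p.2, p.1).
      by rewrite inE /= sym h1.
    by case: p {h1 h2}.
  case/imsetP => q; rewrite inE => /andP [h1 h2] ->.
  by rewrite inE /= sym h1.
have D : [disjoint O1 & O2].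
  rewrite -setI_eq0; apply/eqP/setP => p; rewrite !inE.
  apply/negP => /andP [/andP [_ a] /andP [_ b]].
  by move: (ltn_trans a b); rewrite ltnn.
have S : O1 :|: O2 \subset [set p : T * T | g p.1 p.2].
  by apply/subsetP => p; rewrite !inE => /orP [/andP[->]|/andP[->]].
have := subset_leq_card S. rewrite cardsU (disjoint_setI0 D) cards0 subn0 E2.
lia.
Qed.

Lemma three (T : finType) (g : rel T) c u v : simple_graph g -> g u v ->
  u != c -> v != c -> (deg g c + deg g u + deg g v <= num_edges g + 3)%N.
Proof.
case=> sym irr huv uc vc.
have nl : forall a x, g a x -> x != a.
  by move=> a x h; apply/eqP => E; rewrite E irr in h.
set Nc := [set x | g c x]; set Nu := [set x | g u x]; set Nv := [set x | g v x].
set A := [set [set c; x] | x in Nc].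
set B := [set [set u; x] | x in Nu :\ c].
set C := [set [set v; x] | x in Nv :\: [set c; u]].
have cA : #|A| = #|Nc|.
  apply: card_in_imset => x y; rewrite !inE => hx hy; apply: set2_injr; exact: nl.
have cB : #|B| = #|Nu :\ c|.
  apply: card_in_imset => x y; rewrite !inE => /andP[_ hx] /andP[_ hy];
  apply: set2_injr; exact: nl.
have cC : #|C| = #|Nv :\: [set c; u]|.
  apply: card_in_imset => x y; rewrite !inE => /andP[_ hx] /andP[_ hy];
  apply: set2_injr; exact: nl.
have dAB : A :&: B = set0.
  apply/setP => e; rewrite !inE; apply/negP => /andP [/imsetP [x hx ->]].
  case/imsetP => y; rewrite !inE => /andP [yc _] E.
  have : c \in [set u; y] by rewrite -E set21.
  by rewrite in_set2 eq_sym (negbTE uc) eq_sym (negbTE yc).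
have dAC : A :&: C = set0.
  apply/setP => e; rewrite !inE; apply/negP => /andP [/imsetP [x hx ->]].
  case/imsetP => y; rewrite !inE => /andP [/norP [yc _] _] E.
  have : c \in [set v; y] by rewrite -E set21.
  by rewrite in_set2 eq_sym (negbTE vc) eq_sym (negbTE yc).
have uv : u != v by rewrite eq_sym; apply: nl.
have dBC : B :&: C = set0.
  apply/setP => e; rewrite !inE; apply/negP => /andP [/imsetP [x hx ->]].
  case/imsetP => y; rewrite !inE => /andP [/norP [_ yu] _] E.
  have : u \in [set v; y] by rewrite -E set21.
  by rewrite in_set2 (negbTE uv) eq_sym (negbTE yu).
have sub : A :|: B :|: C \subset edge_set g.
  apply/subsetP => e; rewrite !inE => /orP [/orP [] |] /imsetP [x]; rewrite !inE.
  - by move=> h ->; exact: edge_in.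
  - by move=> /andP [_ h] ->; exact: edge_in.
  - by move=> /andP [_ h] ->; exact: edge_in.
have := subset_leq_card sub.
rewrite cardsU setIUl dAC dBC setU0 cards0 subn0 cardsU dAB cards0 subn0 cA cB cC.
have h1 := cardsD1 c Nu.
have h2 : (#|Nv| <= #|Nv :\: [set c; u]| + 2)%N.
  rewrite cardsD. have : (#|Nv :&: [set c; u]| <= 2)%N.
    apply: leq_trans (subset_leq_card (subsetIr _ _)) _. by rewrite cards2; case: (c != u).
  lia.
rewrite /num_edges /deg -/Nc -/Nu -/Nv.
move: h1 h2; clearbody A B C Nc Nu Nv; case: (c \in Nu) => /=. all: move: #|Nc| #|Nu| #|Nv| #|Nu :\ c| #|Nv :\: [set c; u]| #|edge_set g| => a b d e f h. all: lia.
Qed.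

Unset Implicit Arguments.
Set Strict Implicit.

Local Open Scope ring_scope.

Lemma polyPS (R : realFieldType) (P S : R) : 1 <= P -> P <= 8 -> S <= P + 1 ->
  S <= 566/100 + 177/1000 * (P - 8) -> 2 + 36/70 * (P - 1) <= S ->
  13/200 * (P*P + P*S + P) <= P + S + 1 - 3163/10000*(S^+2 - 2*P + S).
Proof. move=> *. nra. Qed.

Lemma polyPS2 (R : realFieldType) (P S : R) : 1 <= P -> 4 * P <= S^+2 ->
  S^+2 - 2 * P <= 16 -> 0 <= S -> S <= P + 1 ->
  13/200 * (P*P + P*S + P) <= P + S + 1 - 3163/10000*(S^+2 - 2*P + S).
Proof.
move=> hP1 h4 h16 hS0 hSP.
have hP8 : P <= 8 by lra.
have hL : 16 + 2*P <= (566/100 + 177/1000*(P-8))^+2 by have := sqr_ge0 (P - 8); nra.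
have hup : S <= 566/100 + 177/1000 * (P - 8).
  rewrite leNgt; apply/negP => hlt; nra.
have hP18 : 0 <= (P - 1) * (8 - P) by apply: mulr_ge0; lra.
have hl : (2 + 36/70 * (P - 1))^+2 <= 4 * P by nra.
have hlo : 2 + 36/70 * (P - 1) <= S.
  rewrite leNgt; apply/negP => hlt; nra.
exact: (@polyPS R).
Qed.

Lemma polyXY (R : realFieldType) (X Y e : R) : 1 <= X -> 1 <= Y -> X^+2 + Y^+2 <= 16 ->
  0 <= e -> e <= 3163/10000 ->
  13/200 * (X*Y*(X+1)*(Y+1)) <= (X+1)*(Y+1) - e*(Y*(Y+1)) - e*(X*(X+1)).
Proof.
move=> hX hY hs he0 he1.
have hx1 : 0 <= X - 1 by lra.
have hy1 : 0 <= Y - 1 by lra.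
have hm := mulr_ge0 hx1 hy1.
have hP1 : 1 <= X * Y by nra.
have h4 : 4 * (X * Y) <= (X + Y)^+2 by have := sqr_ge0 (X - Y); nra.
have h16 : (X + Y)^+2 - 2 * (X * Y) <= 16 by rewrite sqrrD; lra.
have hS0 : 0 <= X + Y by lra.
have hSP : X + Y <= X * Y + 1 by nra.
have := @polyPS2 R _ _ hP1 h4 h16 hS0 hSP.
have -> : X * Y * (X + 1) * (Y + 1) = (X*Y)*(X*Y) + (X*Y)*(X+Y) + X*Y by ring.
have -> : (X+1)*(Y+1) - e*(Y*(Y+1)) - e*(X*(X+1)) =
   X*Y + (X+Y) + 1 - e*((X+Y)^+2 - 2*(X*Y) + (X+Y)) by ring.
have : 0 <= (X+Y)^+2 - 2*(X*Y) + (X+Y) by rewrite sqrrD; nra.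
move: ((X+Y)^+2 - 2*(X*Y) + (X+Y)) => Z hZ.
nra.
Qed.

Lemma sqrt_ge (R : rcfType) (a b : R) : 0 <= b -> b^+2 <= a -> b <= Num.sqrt a.
Proof.
move=> hb hab. have ha : 0 <= a by have := sqr_ge0 b; lra.
have h2 := sqr_sqrtr ha. have h0 := sqrtr_ge0 a.
rewrite leNgt; apply/negP => hlt. nra.
Qed.

Lemma pair_deg (R : rcfType) (p q D : nat) : (1 <= p)%N -> (1 <= q)%N -> (p + q <= 16)%N -> (10 <= D)%N ->
  13/200 <= (Num.sqrt (p%:R * q%:R))^-1
     - (Num.sqrt (D%:R : R))^-1 / (Num.sqrt p%:R * (Num.sqrt p%:R + 1))
     - (Num.sqrt D%:R)^-1 / (Num.sqrt q%:R * (Num.sqrt q%:R + 1)).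
Proof.
move=> hp hq hpq hD.
have hp' : 1 <= (p%:R : R) by rewrite ler1n.
have hq' : 1 <= (q%:R : R) by rewrite ler1n.
have hpq' : (p%:R : R) + q%:R <= 16 by rewrite -natrD (ler_nat R _ 16).
have hD' : 10 <= (D%:R : R) by rewrite (ler_nat R 10).
rewrite sqrtrM ?ler0n //.
set X := Num.sqrt (p%:R : R); set Y := Num.sqrt (q%:R : R); set s := Num.sqrt (D%:R : R).
have hX : 1 <= X by apply: sqrt_ge; lra.
have hY : 1 <= Y by apply: sqrt_ge; lra.
have hX2 : X^+2 = p%:R by rewrite sqr_sqrtr ?ler0n.
have hY2 : Y^+2 = q%:R by rewrite sqr_sqrtr ?ler0n.
have hs : 3162/1000 <= s by apply: sqrt_ge; lra.
have hs0 : s != 0 by apply/eqP => E; rewrite E in hs; lra.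
have hes : s^-1 * s = 1 by rewrite mulVf.
have he0 : 0 <= s^-1 by rewrite invr_ge0; lra.
have he1 : s^-1 <= 3163/10000 by nra.
have key := @polyXY R _ _ _ hX hY (ltac:(lra) : X^+2 + Y^+2 <= 16) he0 he1.
have Z0 : 0 < X*Y*(X+1)*(Y+1) by apply: mulr_gt0; [apply: mulr_gt0; [apply: mulr_gt0|]|]; lra.
have -> : (X*Y)^-1 - s^-1/(X*(X+1)) - s^-1/(Y*(Y+1)) =
   ((X+1)*(Y+1) - s^-1*(Y*(Y+1)) - s^-1*(X*(X+1))) / (X*Y*(X+1)*(Y+1)).
  have hx : X != 0 by apply/eqP => E; rewrite E in hX; lra.
  have hy : Y != 0 by apply/eqP => E; rewrite E in hY; lra.
  have hx1 : X + 1 != 0 by apply/eqP => E; lra.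
  have hy1 : Y + 1 != 0 by apply/eqP => E; lra.
  field; rewrite ?hx ?hy ?hx1 ?hy1 //.
by rewrite ler_pdivlMr.
Qed.

Lemma final_real (R : rcfType) (Dr jr kr : R) : 10 <= Dr -> 12 <= Dr + jr -> 0 <= jr ->
  0 <= kr -> 9/2 * jr <= kr + 1 ->
  Num.sqrt (Dr + jr) + 2 * (kr + 1) / ((Dr + 1 + jr) * Num.sqrt (Dr + jr))
  < Num.sqrt Dr + 13/200 * (kr + 1 + jr).
Proof.
move=> h10 h12 hj hk hjk.
have hs : 346/100 <= Num.sqrt (Dr + jr) by apply: sqrt_ge; lra.
have ht : 316/100 <= Num.sqrt Dr by apply: sqrt_ge; lra.
have hs2 : Num.sqrt (Dr + jr) ^+ 2 = Dr + jr by rewrite sqr_sqrtr //; lra.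
have ht2 : Num.sqrt Dr ^+ 2 = Dr by rewrite sqr_sqrtr //; lra.
move: hs ht hs2 ht2; set s := Num.sqrt (Dr + jr); set t := Num.sqrt Dr => hs ht hs2 ht2.
have hst : t <= s by rewrite leNgt; apply/negP => hlt; nra.
have hd : (s - t) * (662/100) <= jr by nra.
set N := (Dr + 1 + jr) * s.
have hN : 4498/100 <= N by rewrite /N; nra.
have hN0 : 0 < N by lra.
have ha : 2 * (kr + 1) / N <= 2 * (kr + 1) / (4498/100).
  rewrite ler_pdivrMr // mulrAC ler_pdivlMr; last by lra.
  apply: ler_wpM2l; lra.
lra.
Qed.



Lemma final_ineq (R : rcfType) (n j k D m : nat) : (13 <= n)%N -> (j <= 2)%N ->
  (1 <= k)%N -> (k <= 10)%N -> (j = 1 -> 5 <= k)%N -> (j = 2 -> 8 <= k)%N ->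
  (D + 1 + j = n)%N -> m = (n + k)%N ->
  Num.sqrt ((n - 1)%:R : R) + (2 * (k + 1))%:R / ((n%:R) * Num.sqrt ((n - 1)%:R : R))
  < Num.sqrt (D%:R : R) + 13/200 * (m%:R - D%:R).
Proof.
move=> hn hj hk1 hk10 hj1 hj2 hD hm.
have -> : (n - 1 = D + j)%N by lia.
have -> : (m%:R - D%:R : R) = (k + 1 + j)%:R by rewrite -natrB; [congr (_%:R); lia | lia].
rewrite -hD natrM !natrD.
apply: final_real.
- by rewrite (ler_nat R 10); lia.
- by rewrite -natrD (ler_nat R 12); lia.
- by rewrite ler0n.
- by rewrite ler0n.
- have : (9 * j <= 2 * (k + 1))%N by case: j hj hj1 hj2 {hD} => [|[|[|]]] //= _; lia.
  rewrite -(ler_nat R) !natrM natrD => h. lra.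
Qed.


Lemma dec (R : zmodType) (T : finType) (g : rel T) (c : T) (F : T -> T -> R) :
  simple_graph g -> (forall u v, F u v = F v u) ->
  \sum_u \sum_(v | g u v) F u v =
  (\sum_(v | g c v) F c v) *+ 2 + \sum_(u | u != c) \sum_(v | g u v && (v != c)) F u v.
Proof.
case=> sym irr Fs.
rewrite (eq_bigr (fun u => \sum_(v | g u v && (v == c)) F u v
                         + \sum_(v | g u v && (v != c)) F u v)); last first.
  by move=> u _; rewrite (bigID (fun v => v == c)).
rewrite big_split /=.
have e1 : \sum_u \sum_(v | g u v && (v == c)) F u v = \sum_(v | g c v) F c v.
  rewrite [RHS]big_mkcond /=; apply: eq_bigr => u _.
  case h: (g c u).
  - rewrite (big_pred1 c); first exact: Fs.
    move=> v /=.
    by case: eqP => [->|_]; rewrite ?andbT ?andbF // sym h.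
  - rewrite big_pred0 // => v.
    by case: eqP => [->|_]; rewrite ?andbT ?andbF // sym h.
have e2 : \sum_u \sum_(v | g u v && (v != c)) F u v =
   \sum_(v | g c v) F c v + \sum_(u | u != c) \sum_(v | g u v && (v != c)) F u v.
  rewrite (bigD1 c) //=. congr (_ + _). apply: eq_bigl => v.
  case h: (g c v) => //=. apply/eqP => E; by rewrite E irr in h.
by rewrite e1 e2 mulr2n addrA.
Qed.

Lemma swap_sum (R : zmodType) (T : finType) (g : rel T) (c : T) (G : T -> R) :
  simple_graph g ->
  \sum_(u | u != c) \sum_(v | g u v && (v != c)) G u =
  \sum_(u | u != c) \sum_(v | g u v && (v != c)) G v.
Proof.
case=> sym irr.
rewrite (exchange_big_dep (fun v => v != c)) /=; last by move=> u v _ /andP[].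
apply: eq_bigr => v vc; apply: eq_bigl => u. by rewrite vc andbT sym andbC.
Qed.

Lemma sum1_deg (R : numDomainType) (T : finType) (g : rel T) (u : T) :
  \sum_(v | g u v) (1 : R) = (deg g u)%:R.
Proof.
rewrite (eq_bigl (fun v => v \in [set v | g u v])) => [|v]; last by rewrite inE.
by rewrite sumr_const.
Qed.


Lemma deg_gt0 (T : finType) (g : rel T) u v : g u v -> (1 <= deg g u)%N.
Proof. by move=> h; rewrite /deg; apply/card_gt0P; exists v; rewrite inE. Qed.

Lemma core (R : rcfType) (T : finType) (g : rel T) (c : T) : simple_graph g ->
  (10 <= deg g c)%N ->
  (forall u v, g u v -> u != c -> v != c -> (deg g u + deg g v <= 16)%N) ->
  Num.sqrt ((deg g c)%:R : R) + 13/200 * ((num_edges g)%:R - (deg g c)%:R) <= randic R g.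
Proof.
move=> sg hD hpair. have [sym irr] := sg.
pose w := fun u v => (Num.sqrt ((deg g u)%:R * (deg g v)%:R))^-1 : R.
pose s := Num.sqrt ((deg g c)%:R : R).
pose e := s^-1.
pose phi := fun u => e / (Num.sqrt ((deg g u)%:R : R) * (Num.sqrt (deg g u)%:R + 1)).
pose SS := fun F : T -> T -> R => \sum_(u | u != c) \sum_(v | g u v && (v != c)) F u v.
have wsym : forall u v, w u v = w v u by move=> u v; rewrite /w mulrC.
have Rdef : randic R g = 2^-1 * \sum_u \sum_(v | g u v) w u v by [].
have Dr : 10 <= ((deg g c)%:R : R) by rewrite (ler_nat R 10).
have hs : 3 <= s by apply: sqrt_ge; lra.
have hs2 : s ^+ 2 = (deg g c)%:R by rewrite sqr_sqrtr // ler0n.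
have hs0 : s != 0 by apply/eqP => E; rewrite E in hs; lra.
have he0 : 0 <= e by rewrite invr_ge0; lra.
have phi0 : forall u, 0 <= phi u.
  move=> u; apply: divr_ge0 => //; apply: mulr_ge0; first exact: sqrtr_ge0.
  have := sqrtr_ge0 ((deg g u)%:R : R); lra.
have hB : s - SS (fun u _ => phi u) <= \sum_(v | g c v) w c v.
  have pt : forall v, g c v -> w c v = e - \sum_(x | g v x && (x != c)) phi v.
    move=> v hv.
    have hdv : ((deg g v)%:R : R) = 1 + \sum_(x | g v x && (x != c)) (1:R).
      by rewrite -sum1_deg (bigD1 c) //= sym.
    have -> : \sum_(x | g v x && (x != c)) phi v = (\sum_(x | g v x && (x != c)) (1:R)) * phi v.
      by rewrite mulr_suml; apply: eq_bigr => x _; rewrite mul1r.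
    move: hdv; set K := \sum_(x | g v x && (x != c)) (1:R) => hdv.
    rewrite /w /phi sqrtrM ?ler0n // invfM -/s -/e.
    have gvc : g v c by rewrite sym.
    have hdv1 : 1 <= ((deg g v)%:R : R) by rewrite ler1n; exact: (@deg_gt0 _ _ _ _ gvc).
    have hX : 1 <= Num.sqrt ((deg g v)%:R : R) by apply: sqrt_ge; lra.
    have hX2 : Num.sqrt ((deg g v)%:R : R) ^+ 2 = 1 + K by rewrite sqr_sqrtr ?ler0n.
    move: hX hX2; set X := Num.sqrt ((deg g v)%:R : R) => hX hX2.
    have -> : K = X^+2 - 1 by rewrite hX2; ring.
    have hx : X != 0 by apply/eqP => E; rewrite E in hX; lra.
    have hx1 : X + 1 != 0 by apply/eqP => E; lra.
    rewrite /e. field. by rewrite hs0 hx hx1.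
  rewrite (eq_bigr (fun v => e - \sum_(x | g v x && (x != c)) phi v) pt) sumrB.
  have -> : \sum_(v | g c v) e = (deg g c)%:R * e.
    by rewrite -sum1_deg mulr_suml; apply: eq_bigr => v _; rewrite mul1r.
  rewrite -hs2 expr2 /e mulfK //.
  suff : \sum_(v | g c v) \sum_(x | g v x && (x != c)) phi v <= SS (fun u _ => phi u) by lra.
  rewrite /SS [X in _ <= X]big_mkcond [X in X <= _]big_mkcond /=.
  apply: ler_sum => v _. case h: (g c v).
  - have vc : v != c by apply/eqP => E; rewrite E irr in h.
    by rewrite vc.
  - case: (v != c) => //. apply: sumr_ge0 => x _; exact: phi0.
have hC : 13/200 * SS (fun _ _ => 1) <= SS w - (SS (fun u _ => phi u)) *+ 2.
  have sw : SS (fun u _ => phi u) = SS (fun _ v => phi v) by exact: swap_sum.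
  have lin : SS (fun u v => w u v - phi u - phi v) =
      SS w - SS (fun u _ => phi u) - SS (fun _ v => phi v).
    rewrite /SS -!sumrB; apply: eq_bigr => u _; by rewrite -!sumrB.
  have low : 13/200 * SS (fun _ _ => 1) <= SS (fun u v => w u v - phi u - phi v).
    rewrite /SS mulr_sumr; apply: ler_sum => u uc; rewrite mulr_sumr.
    apply: ler_sum => v /andP [huv vc]; rewrite mulr1.
    rewrite /w /phi /e /s. apply: pair_deg.
    - exact: (@deg_gt0 _ _ _ _ huv).
    - by apply: (@deg_gt0 _ g v u); rewrite sym.
    - exact: hpair.
    - exact: hD.
  by move: low; rewrite lin -sw mulr2n opprD addrA.
have hE : (num_edges g)%:R *+ 2 <= (deg g c)%:R *+ 2 + SS (fun _ _ => 1).
  have := handshake sg.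
  rewrite -(ler_nat R) natr_sum natrM.
  have -> : \sum_u ((deg g u)%:R : R) = \sum_u \sum_(v | g u v) (1:R).
    by apply: eq_bigr => u _; rewrite sum1_deg.
  rewrite (@dec R T g c (fun _ _ => (1:R)) sg) // sum1_deg -/(SS (fun _ _ => 1)) => h.
  move: h; set P1 := SS (fun _ _ => 1); clearbody P1 => h.
  by rewrite mulr_natl in h.
rewrite Rdef (@dec R T g c w sg wsym) -/(SS w) -/s.
move: hB hC hE.
set C := \sum_(v | g c v) w c v.
set A := SS w. set B := SS (fun u _ => phi u). set P1 := SS (fun _ _ => 1).
clearbody C A B P1 s => hB hC hE.
have -> : 2^-1 * (C *+ 2 + A) = C + 2^-1 * A by rewrite mulr2n; field.
rewrite mulr2n in hC. rewrite -mulr_natl in hE. lra.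
Qed.

Local Close Scope ring_scope.

Lemma finish (R : rcfType) (T : finType) (g : rel T) (k j : nat) :
  simple_graph g -> (13 <= #|T|)%N -> (j <= 2)%N -> (1 <= k)%N -> (k <= 10)%N ->
  (j = 1 -> 5 <= k)%N -> (j = 2 -> 8 <= k)%N ->
  (max_deg g + 1 + j = #|T|)%N -> num_edges g = (#|T| + k)%N ->
  (Num.sqrt ((#|T| - 1)%:R : R)
     + (2 * (k + 1))%:R / ((#|T|)%:R * Num.sqrt ((#|T| - 1)%:R : R))
   < randic R g)%R.
Proof.
move=> sg hn hj hk1 hk10 hj1 hj2 hD hm.
have [c hc] := @bigop.eq_bigmax T (deg g) (leq_trans (isT : (0 < 13)%N) hn).
have hmax : max_deg g = deg g c by rewrite /max_deg hc.
rewrite hmax in hD.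
have hD10 : (10 <= deg g c)%N by lia.
have hpair : forall u v, g u v -> u != c -> v != c -> (deg g u + deg g v <= 16)%N.
  move=> u v huv uc vc. have := three sg huv uc vc. lia.
have := @core R T g c sg hD10 hpair.
have := @final_ineq R _ _ _ _ _ hn hj hk1 hk10 hj1 hj2 hD hm.
exact: Order.POrderTheory.lt_le_trans.
Qed.

Theorem lemma3p9 (R : rcfType) (T : finType) (g : rel T) (k : nat) :
  simple_graph g -> connected_graph g -> (13 <= #|T|)%N ->
  [\/ [/\ max_deg g = (#|T| - 1)%N, num_edges g = (#|T| + k)%N & (1 <= k <= 10)%N],
      [/\ max_deg g = (#|T| - 2)%N, num_edges g = (#|T| + k)%N & (5 <= k <= 10)%N] |
      [/\ max_deg g = (#|T| - 3)%N, num_edges g = (#|T| + k)%N & (8 <= k <= 10)%N]] ->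
  (Num.sqrt ((#|T| - 1)%:R : R)
     + (2 * (k + 1))%:R / ((#|T|)%:R * Num.sqrt ((#|T| - 1)%:R : R))
   < randic R g)%R.
Proof.
move=> sg _ hn [[hD hm /andP [hk1 hk10]]|[hD hm /andP [hk1 hk10]]|[hD hm /andP [hk1 hk10]]].
- apply: (@finish R T g k 0) => //; lia.
- apply: (@finish R T g k 1) => //; lia.
- apply: (@finish R T g k 2) => //; lia.
Qed.
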